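(* Let $a\geq 3$ be an odd integer, let $\alpha\in B_a$, let $n\geq 1$ be an integer, and let $r$ be an odd positive integer with $r\leq 2a^n$. Then the line $y=\alpha\left(x-\frac{r}{2a^n}\right)$ in $\mathbb{R}^2$ contains no point of the form $\left(\frac{u}{a^l},\frac{v}{a^m}\right)$ with $u,v,l,m\in\mathbb{Z}$.
   Context: For an odd integer $a\geq 3$, $$B_a=\left\{\frac{p}{q}\ :\ p+q\leq a-1,\ 0\leq p\leq q\leq a-2,\ p,q\in\mathbb{N},\ p\text{ and }q\text{ odd}\right\},$$ where $\mathbb{N}=\{1,2,3,\dots\}$. *)

(* Defs.v *)
From mathcomp Require Import all_boot all_order all_algebra.
Set Implicit Arguments. Unset Strict Implicit. Unset Printing Implicit Defensive.
Import Order.TTheory GRing.Theory Num.Theory.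
Local Open Scope ring_scope.

Definition in_B (R : realFieldType) (a : nat) (alpha : R) : Prop :=
  exists p q : nat,
    [/\ (0 < p)%N, (0 < q)%N, odd p & odd q] /\
    [/\ (p + q <= a - 1)%N, (p <= q)%N & (q <= a - 2)%N] /\
    alpha = p%:R / q%:R.

(* Main.v *)
Require Import Defs.
From mathcomp Require Import all_boot all_order all_algebra.
From mathcomp Require Import zify ring lra.
Import Order.TTheory GRing.Theory Num.Theory.
Local Open Scope ring_scope.

Lemma powsplit (R : realFieldType) (A : R) (m : int) (N : nat) :
  A != 0 -> (m <= N%:Z) -> A ^ m * A ^+ `|N%:Z - m|%N = A ^+ N.
Proof.
move=> A0 hmN.
have e : (`|N%:Z - m|%N : int) = N%:Z - m by rewrite gez0_abs // subr_ge0.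
by rewrite !exprnP e -expfzDr // addrC subrK.
Qed.

Theorem lemma3p2 (R : realFieldType) (a : nat) (alpha : R) (n r : nat) :
  (3 <= a)%N -> odd a -> in_B a alpha ->
  (1 <= n)%N -> odd r -> (0 < r)%N -> (r <= 2 * a ^ n)%N ->
  ~ exists (u v l m : int),
      (v%:~R / (a%:R ^ m) : R) =
        alpha * (u%:~R / (a%:R ^ l) - r%:R / (2 * a%:R ^+ n)).
Proof.
move=> a3 oa [p [q [[p0 q0 op oq] [_ ->]]]] n1 or r0 _ [u [v [l [m E]]]].
set A : R := a%:R in E.
have A0 : A != 0 by rewrite /A pnatr_eq0; lia.
have Am0 : A ^ m != 0 by apply: expfz_neq0.
have Al0 : A ^ l != 0 by apply: expfz_neq0.
have An0 : A ^+ n != 0 by apply: expf_neq0.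
have q0' : (q%:R : R) != 0 by rewrite pnatr_eq0; lia.
set N : nat := (`|m| + `|l| + n)%N.
set k1 := `|N%:Z - m|%N. set k2 := `|N%:Z - l|%N. set k3 := (N - n)%N.
have h1 : A ^ m * A ^+ k1 = A ^+ N.
  apply: powsplit => //; rewrite /N.
  have := lez_abs m; lia.
have h2 : A ^ l * A ^+ k2 = A ^+ N.
  apply: powsplit => //; rewrite /N.
  have := lez_abs l; lia.
have h3 : A ^+ n * A ^+ k3 = A ^+ N by rewrite -exprD /k3 /N; congr (_ ^+ _); lia.
have T : 2 * q%:R * v%:~R * A ^+ k1 = p%:R * (2 * u%:~R * A ^+ k2 - r%:R * A ^+ k3) :> R.
  have e1 : v%:~R * A ^+ k1 = v%:~R / A ^ m * A ^+ N by rewrite -h1; field.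
  have e2 : u%:~R * A ^+ k2 = u%:~R / A ^ l * A ^+ N by rewrite -h2; field.
  have e3 : r%:R * A ^+ k3 = r%:R / (2 * A ^+ n) * (2 * A ^+ N) by rewrite -h3; field.
  rewrite -[2 * q%:R * _ * _]mulrA e1 -[2 * u%:~R * _]mulrA e2 e3.
  rewrite [v%:~R / _]E; field; by rewrite An0 Al0 q0'.
have TZ : (2 * q%:Z * v * (a ^ k1)%N = p%:Z * (2 * u * (a ^ k2)%N - r%:Z * (a ^ k3)%N))%R.
  apply: (@intr_inj R).
  rewrite !(rmorphM, rmorphB) /=.
  move: T; rewrite /A -!natrX; exact.
have od : odd (p * r * a ^ k3) by rewrite !oddM op or oddX oa orbT.
have := odd_double_half (p * r * a ^ k3); rewrite od.
move: TZ; rewrite -!PoszM.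
move: (a ^ k1)%N (a ^ k2)%N (a ^ k3)%N => x1 x2 x3.
lia.
Qed.
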